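(* Let $d\ge3$, $\alpha\in(0,1/2)$, $z\in(0,1)$, and for $\beta>0$ set $y=y(\beta)=-\beta^{-1}\log z$. Let $r_1,\dots,r_d$ be independent with distribution $\alpha\delta_{-1}+(1-2\alpha)\delta_0+\alpha\delta_1$, let $\rho_i(\sigma)=\frac{1+\sigma r_i}{2}$ for $\sigma=\pm1$, and $X_1=\sum_{\tau\in\{\pm1\}}\prod_{h=1}^d\left(1-(1-e^{-\beta})\rho_h(\tau)\right)$. Then \[\lim_{\beta\to\infty}\log\mathbb{E}[X_1^y]=\log(\zeta\mathcal{A}^d\xi),\] where $\mathcal{A}=(1-2\alpha)I+2\alpha\sqrt z\,\mathcal{M}$, $I$ is the $(d+1)\times(d+1)$ identity, $\zeta=(1,0,\dots,0)\in\mathbb{R}^{1\times(d+1)}$, $\xi=(1,z^{-1/2},z^{-1},\dots,z^{-d/2})^T\in\mathbb{R}^{(d+1)\times1}$, and $\mathcal{M}$ is the $(d+1)\times(d+1)$ matrix indexed by $0,\dots,d$ with $\mathcal{M}_{0,1}=\mathcal{M}_{d,d-1}=1$, $\mathcal{M}_{i,i-1}=\mathcal{M}_{i,i+1}=1/2$ for $1\le i\le d-1$, and all other entries $0$.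
   Context: $\delta_x$ denotes the point mass at $x$. *)

(* Defs.v *)
From HB Require Import structures.
From mathcomp Require Import all_boot all_order all_algebra.
From mathcomp Require Import all_classical all_reals all_analysis.
Set Implicit Arguments. Unset Strict Implicit. Unset Printing Implicit Defensive.
Import Order.TTheory GRing.Theory Num.Theory.
Import numFieldNormedType.Exports.
Local Open Scope ring_scope.

Section Lemma62Defs.
Variables (R : realType) (d : nat) (alpha z : R).

(* the value of r_i encoded by k : 'I_3 is k - 1 in {-1,0,1} *)
Definition rval (k : 'I_3) : R := (k : nat)%:R - 1.
Definition rprob (k : 'I_3) : R := if (k : nat) == 1%N then 1 - 2 * alpha else alpha.

Definition rho (r : {ffun 'I_d -> 'I_3}) (i : 'I_d) (sigma : R) : R :=
  (1 + sigma * rval (r i)) / 2.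

Definition X1 (beta : R) (r : {ffun 'I_d -> 'I_3}) : R :=
  \sum_(tau <- [:: 1; -1]) \prod_(h < d) (1 - (1 - expR (- beta)) * rho r h tau).

Definition yb (beta : R) : R := - (ln z) / beta.

(* E[X_1^y] for independent r_1..r_d: expectation over the finite product law *)
Definition EX1y (beta : R) : R :=
  \sum_(r : {ffun 'I_d -> 'I_3}) (\prod_(h < d) rprob (r h)) * (X1 beta r) `^ (yb beta).

Definition Mmat : 'M[R]_(d.+1) :=
  \matrix_(i, j)
    if (i : nat) == 0%N then ((j : nat) == 1%N)%:R
    else if (i : nat) == d then ((j : nat) == d.-1)%:R
    else (((j : nat) == (i : nat).-1) || ((j : nat) == (i : nat).+1))%:R / 2.

Definition Amat : 'M[R]_(d.+1) := (1 - 2 * alpha)%:M + (2 * alpha * Num.sqrt z) *: Mmat.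

Definition zeta : 'rV[R]_(d.+1) := \row_(j < d.+1) ((j : nat) == 0%N)%:R.

Definition xi : 'cV[R]_(d.+1) := \col_(k < d.+1) z `^ (- ((k : nat)%:R / 2)).

Definition limit_value : R := (zeta *m Amat ^+ d *m xi) 0 0.

End Lemma62Defs.

(* Main.v *)
Require Import Defs.
From HB Require Import structures.
From mathcomp Require Import all_boot all_order all_algebra.
From mathcomp Require Import all_classical all_reals all_analysis.
From mathcomp Require Import zify ring lra.
Set Implicit Arguments. Unset Strict Implicit. Unset Printing Implicit Defensive.
Import Order.TTheory GRing.Theory Num.Theory.
Import numFieldNormedType.Exports.
Local Open Scope classical_set_scope.
Local Open Scope ring_scope.

Definition k0 : 'I_3 := Ordinal (isT : (0 < 3)%N).
Definition k1 : 'I_3 := Ordinal (isT : (1 < 3)%N).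
Definition k2 : 'I_3 := Ordinal (isT : (2 < 3)%N).

Definition fcons n (k : 'I_3) (g : {ffun 'I_n -> 'I_3}) : {ffun 'I_n.+1 -> 'I_3} :=
  [ffun i => if unlift ord0 i is Some j then g j else k].

Lemma fcons0 n k (g : {ffun 'I_n -> 'I_3}) : fcons k g ord0 = k.
Proof. by rewrite ffunE unlift_none. Qed.

Lemma fconsS n k (g : {ffun 'I_n -> 'I_3}) j : fcons k g (lift ord0 j) = g j.
Proof. by rewrite ffunE liftK. Qed.

Lemma sum_fcons (R : realType) n (F : {ffun 'I_n.+1 -> 'I_3} -> R) :
  \sum_r F r = \sum_k \sum_(g : {ffun 'I_n -> 'I_3}) F (fcons k g).
Proof.
rewrite pair_big /=.
rewrite (reindex (fun p : 'I_3 * {ffun 'I_n -> 'I_3} => fcons p.1 p.2)) //=.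
exists (fun r => (r ord0, [ffun j => r (lift ord0 j)])) => [[k g] _|r _] /=.
  rewrite fcons0; congr pair; apply/ffunP => j; by rewrite ffunE fconsS.
apply/ffunP => i; rewrite ffunE; case: unliftP => [j ->|->] //.
by rewrite ffunE.
Qed.

Definition cnt n (k : 'I_3) (r : {ffun 'I_n -> 'I_3}) : nat := (\sum_(h < n) (r h == k))%N.

Lemma cnt_fcons n k k' (g : {ffun 'I_n -> 'I_3}) :
  cnt k' (fcons k g) = ((k == k') + cnt k' g)%N.
Proof.
rewrite /cnt big_ord_recl fcons0; congr addn; apply: eq_bigr => i _.
by rewrite fconsS.
Qed.

Lemma cnt_bound n (r : {ffun 'I_n -> 'I_3}) : (cnt k2 r + cnt k0 r <= n)%N.
Proof.
rewrite /cnt -big_split /=.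
rewrite -[X in (_ <= X)%N]card_ord -sum1_card.
apply: leq_sum => i _.
by case: (r i) => [[|[|[|m]]] Hm].
Qed.

Lemma sum3 (R : realType) (F : 'I_3 -> R) : \sum_(k < 3) F k = F k0 + F k1 + F k2.
Proof.
rewrite !big_ord_recl big_ord0 addr0 addrA.
by congr (F _ + F _ + F _); apply: val_inj.
Qed.

Lemma sum_delta (R : realType) m D x (c : 'I_m.+1 -> R) : (D < m.+1)%N ->
  \sum_(i < m.+1) x * (D == i)%:R * c i = x * c (inord D).
Proof.
move=> Dm; rewrite (bigD1 (inord D)) //= inordK // eqxx mulr1 big1 ?addr0 // => i Hi.
case: (eqVneq D i) => [Di|]; last by rewrite mulr0 mul0r.
exfalso; move/negP: Hi; apply; apply/eqP/val_inj; rewrite /= inordK // Di.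
Qed.

Definition pr (R : realType) n (alpha : R) (r : {ffun 'I_n -> 'I_3}) : R :=
  \prod_(h < n) rprob alpha (r h).
Definition Dst n (r : {ffun 'I_n -> 'I_3}) : nat :=
  (cnt k2 r - cnt k0 r + (cnt k0 r - cnt k2 r))%N.
Definition mv n (r : {ffun 'I_n -> 'I_3}) : nat := (cnt k2 r + cnt k0 r)%N.

Lemma pr_fcons (R : realType) (alpha : R) n k (g : {ffun 'I_n -> 'I_3}) :
  pr alpha (fcons k g) = rprob alpha k * pr alpha g.
Proof.
rewrite /pr big_ord_recl fcons0; congr (_ * _); apply: eq_bigr => i _.
by rewrite fconsS.
Qed.
Lemma orR (R : realType) (x y j : nat) : x != y ->
  ((j == x) || (j == y))%:R = (j == x)%:R + (j == y)%:R :> R.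
Proof.
move=> xy; case: (eqVneq j x) => [->|jx].
  by rewrite (negbTE xy) addr0.
by rewrite add0r.
Qed.

Lemma Amat_entry0 (R : realType) d (alpha z : R) (D Dm Dp : nat) (j : 'I_d.+1) :
  (D < d)%N ->
  [\/ [/\ Dm = D.-1, Dp = D.+1 & D != 0%N],
       [/\ Dm = D.+1, Dp = D.-1 & D != 0%N] |
       [/\ D = 0%N, Dm = 1%N & Dp = 1%N]] ->
  Amat d alpha z (inord D) j =
   alpha * Num.sqrt z * (Dm == j)%:R
   + (1 - 2*alpha) * (D == j)%:R
   + alpha * Num.sqrt z * (Dp == j)%:R.
Proof.
move=> Dd H.
have Dd1 : (D < d.+1)%N by apply: ltnW.
have Dnd : (D == d) = false by apply/negbTE; rewrite neq_ltn Dd.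
have Ej : (inord D == j) = (D == j :> nat) by rewrite -val_eqE /= inordK.
rewrite !mxE Ej inordK // Dnd -[(1 - 2 * alpha) *+ _]mulr_natr !(eq_sym _ (nat_of_ord j)).
case: H => -[-> -> D0].
- rewrite (negbTE D0) orR; last by clear -D0; lia.
  by field.
- rewrite (negbTE D0) orR; last by clear -D0; lia.
  by field.
- rewrite D0 /=; ring.
Qed.

Lemma vec_step (R : realType) d (alpha z : R) n : (n <= d)%N -> forall j : 'I_d.+1,
  (zeta R d *m Amat d alpha z ^+ n) 0 j =
  \sum_(r : {ffun 'I_n -> 'I_3}) pr alpha r * Num.sqrt z ^+ (mv r) * (Dst r == j)%:R.
Proof.
elim: n => [|n IH] Hn j.
  have E : forall r : {ffun 'I_0 -> 'I_3}, r = [ffun => k0].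
    by move=> r; apply/ffunP => -[].
  rewrite expr0 mulmx1 mxE (big_pred1 [ffun => k0]); last first.
    by move=> r /=; rewrite (E r) eqxx.
  by rewrite /pr /mv /Dst /cnt !big_ord0 mul1r expr0 mul1r eq_sym.
rewrite exprSr -mulmxE mulmxA mxE.
under eq_bigr => i _ do rewrite IH ?(ltnW Hn) // mulr_suml.
rewrite exchange_big /= [RHS]sum_fcons [RHS]exchange_big /=.
apply: eq_bigr => g _.
have hb := cnt_bound g.
rewrite (@sum_delta _ _ _ _ (fun i => Amat d alpha z i j)); last first.
  rewrite /Dst; clear -hb Hn; lia.
rewrite (@Amat_entry0 _ _ _ _ (Dst g) (Dst (fcons k0 g)) (Dst (fcons k2 g))); last first.
- rewrite /Dst !cnt_fcons /=.
  case: (ltngtP (cnt k2 g) (cnt k0 g)) => H; [apply: Or32| apply: Or31 | apply: Or33];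
    split; clear -H; lia.
- rewrite /Dst; clear -hb Hn; lia.
rewrite sum3 !pr_fcons /mv !cnt_fcons /=.
rewrite /rprob /=.
have -> : Dst (fcons k1 g) = Dst g by rewrite /Dst !cnt_fcons.
rewrite !add0n add1n addnS !exprS; ring.
Qed.

Lemma sqrt_pow_eq (R : realType) (z : R) a b : 0 < z ->
  Num.sqrt z ^+ (a + b) * z `^ (- ((a - b + (b - a))%N%:R / 2)) = z ^+ minn a b.
Proof.
move=> z0.
have -> : (a + b = 2 * minn a b + (a - b + (b - a)))%N by lia.
move: (a - b + (b - a))%N => D.
have sz0 : 0 < Num.sqrt z by rewrite sqrtr_gt0.
rewrite exprD exprM sqr_sqrtr ?ltW // powRN.
rewrite [X in z `^ X]mulrC powRrM powR12_sqrt ?ltW //.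
rewrite powR_mulrn ?ltW // mulfK //.
by rewrite gt_eqF // exprn_gt0.
Qed.

Lemma limit_value_eq (R : realType) d (alpha z : R) : 0 < z ->
  limit_value d alpha z =
  \sum_(r : {ffun 'I_d -> 'I_3}) pr alpha r * z ^+ minn (cnt k2 r) (cnt k0 r).
Proof.
move=> z0; rewrite /limit_value mxE.
under eq_bigr => j _ do rewrite vec_step // mulr_suml.
rewrite exchange_big /=; apply: eq_bigr => r _.
have hb := cnt_bound r.
rewrite (@sum_delta _ _ _ _ (fun i => xi d z i 0)); last by rewrite /Dst; clear -hb; lia.
rewrite mxE inordK; last by rewrite /Dst; clear -hb; lia.
by rewrite -mulrA sqrt_pow_eq.
Qed.
Lemma prod_cnt (R : realType) n (F : 'I_3 -> R) (r : {ffun 'I_n -> 'I_3}) :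
  \prod_(h < n) F (r h) = F k0 ^+ cnt k0 r * F k1 ^+ cnt k1 r * F k2 ^+ cnt k2 r.
Proof.
rewrite /cnt -!prodrXr -!big_split /=; apply: eq_bigr => h _.
case: (r h) => [[|[|[|m]]] Hm] //=.
- rewrite expr1 !expr0 !mulr1; congr F; exact: val_inj.
- rewrite expr1 !expr0 mulr1 mul1r; congr F; exact: val_inj.
- rewrite expr1 !expr0 !mul1r; congr F; exact: val_inj.
Qed.

Lemma X1_eq (R : realType) d (beta : R) (r : {ffun 'I_d -> 'I_3}) :
  X1 beta r = ((1 + expR (- beta)) / 2) ^+ cnt k1 r *
    (expR (- beta) ^+ cnt k2 r + expR (- beta) ^+ cnt k0 r).
Proof.
rewrite /X1 big_cons big_cons big_nil addr0 /rho.
rewrite (prod_cnt (fun k => 1 - (1 - expR (- beta)) * ((1 + 1 * rval R k) / 2))).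
rewrite (prod_cnt (fun k => 1 - (1 - expR (- beta)) * ((1 + -1 * rval R k) / 2))).
rewrite /rval /=.
set e := expR (- beta).
have -> : 1 - (1 - e) * ((1 + 1 * (0%:R - 1)) / 2) = 1 :> R by field.
have E1 : forall s : R, 1 - (1 - e) * ((1 + s * (1%:R - 1)) / 2) = (1 + e) / 2.
  by move=> s; field.
have -> : 1 - (1 - e) * ((1 + 1 * (2%:R - 1)) / 2) = e :> R by field.
have -> : 1 - (1 - e) * ((1 + -1 * (0%:R - 1)) / 2) = e :> R by field.
have -> : 1 - (1 - e) * ((1 + -1 * (2%:R - 1)) / 2) = 1 :> R by field.
rewrite !E1 !expr1n; ring.
Qed.

Lemma expN_cvg (R : realType) : expR (- x) @[x --> +oo] --> (0 : R).
Proof. exact: cvgr_expR. Qed.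

Lemma inv_cvg (R : realType) : x^-1 @[x --> +oo] --> (0 : R).
Proof.
have := @cvgrVy R R (+oo) _ (fun x => x^-1).
rewrite /=. move=> H. apply/H.
  near=> x; rewrite invr_gt0; near: x; exact: nbhs_pinfty_gt.
under eq_cvg do rewrite /= invrK.
exact: cvg_id.
Unshelve. all: by end_near.
Qed.

Lemma X1_lim (R : realType) d (z : R) (r : {ffun 'I_d -> 'I_3}) : 0 < z ->
  X1 beta r `^ yb z beta @[beta --> +oo] --> z ^+ minn (cnt k2 r) (cnt k0 r).
Proof.
move=> z0.
set a := cnt k2 r; set b := cnt k0 r; set c := cnt k1 r; set m := minn a b.
pose e (x : R) := expR (- x).
pose Q x := e x ^+ (a - m) + e x ^+ (b - m).
pose B x := c%:R * ln ((1 + e x) / 2) + ln (Q x).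
pose g x := m%:R * ln z + (- ln z) * (B x * x^-1).
have Q0 : 0 < (0:R) ^+ (a - m) + (0:R) ^+ (b - m).
  rewrite /m; case: (leqP a b) => ab.
    rewrite subnn expr0; have := @exprn_ge0 R (b - a) 0 (lexx 0); lra.
  rewrite subnn expr0; have := @exprn_ge0 R (a - b) 0 (lexx 0); lra.
have Bcvg : B x @[x --> +oo] --> c%:R * ln ((1 + 0) / 2) + ln ((0:R) ^+ (a - m) + (0:R) ^+ (b - m)).
  apply: cvgD.
    apply: cvgMl_tmp.
    apply: (continuous_cvg _ (continuous_ln _)); first by lra.
    apply: cvgMr_tmp; apply: cvgD; [exact: cvg_cst | exact: expN_cvg].
  apply: (continuous_cvg _ (continuous_ln Q0)).
  apply: cvgD.
    apply: (@continuous_cvg _ _ _ _ _ e (fun x => x ^+ (a - m))).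
      exact: exprn_continuous.
    exact: expN_cvg.
  apply: (@continuous_cvg _ _ _ _ _ e (fun x => x ^+ (b - m))).
    exact: exprn_continuous.
  exact: expN_cvg.
set Binf := (X in B x @[x --> +oo] --> X) in Bcvg.
have gcvg : g x @[x --> +oo] --> m%:R * ln z + (- ln z) * (Binf * 0).
  apply: cvgD; first exact: cvg_cst.
  apply: cvgMl_tmp; apply: cvgM; [exact: Bcvg | exact: inv_cvg].
have -> : z ^+ m = expR (m%:R * ln z + (- ln z) * (Binf * 0)).
  by rewrite !mulr0 addr0 expRM_natl lnK // posrE.
have H2 := @continuous_cvg _ _ _ _ _ g expR _ (@continuous_expR R _) gcvg.
suff HH : \forall x \near +oo, (expR \o g) x = X1 x r `^ yb z x.
  apply: (@cvg_trans _ ((expR \o g) @ +oo)); last exact: H2.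
  apply: near_eq_cvg. exact: HH.
near=> x.
have x0 : 0 < x by near: x; apply: nbhs_pinfty_gt; exact: num_real.
have ex0 : 0 < e x := expR_gt0 _.
have Q0x : 0 < Q x by rewrite /Q addr_gt0 // exprn_gt0.
have h0 : 0 < (1 + e x) / 2 by rewrite divr_gt0 // addr_gt0.
have Xeq : X1 x r = ((1 + e x) / 2) ^+ c * (e x ^+ m * Q x).
  rewrite X1_eq /Q [in RHS]mulrDr -!exprD !subnKC ?geq_minl ?geq_minr //.
have X0 : 0 < X1 x r by rewrite Xeq mulr_gt0 // ?mulr_gt0 // exprn_gt0.
rewrite /powR (gt_eqF X0); congr expR.
rewrite Xeq lnM ?posrE ?mulr_gt0 ?exprn_gt0 // lnM ?posrE ?exprn_gt0 //.
rewrite !lnXn // /e expRK /g /B /Q /e /yb.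
field; exact: lt0r_neq0.
Unshelve. all: by end_near.
Qed.

Unset Implicit Arguments.
Theorem lemma6p2 (R : realType) (d : nat) (alpha z : R) :
  (3 <= d)%N -> 0 < alpha < 1 / 2 -> 0 < z < 1 ->
  ln (EX1y d alpha z beta) @[beta --> +oo] --> ln (limit_value d alpha z).
Proof.
move=> d3 /andP[a0 a12] /andP[z0 z1].
have L : EX1y d alpha z beta @[beta --> +oo] --> limit_value d alpha z.
  rewrite limit_value_eq // /EX1y.
  apply: cvg_big => //; first exact: add_continuous.
  move=> r _; apply: cvgMl_tmp; exact: X1_lim.
have rp : forall k, 0 < rprob alpha k.
  by move=> k; rewrite /rprob; case: ifP => _ //; lra.
have Lpos : 0 < limit_value d alpha z.
  pose r0 : {ffun 'I_d -> 'I_3} := [ffun=> k0].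
  rewrite limit_value_eq // (bigD1 r0) //=.
  have t1 : 0 < pr alpha r0 * z ^+ minn (cnt k2 r0) (cnt k0 r0).
    apply: mulr_gt0; last exact: exprn_gt0.
    by rewrite /pr; apply: prodr_gt0 => h _; exact: rp.
  have t2 : 0 <= \sum_(i | i != r0) pr alpha i * z ^+ minn (cnt k2 i) (cnt k0 i).
    apply: sumr_ge0 => i _; apply: mulr_ge0; last exact/exprn_ge0/ltW.
    by rewrite /pr; apply: prodr_ge0 => h _; exact/ltW.
  lra.
have H := @continuous_cvg _ _ _ _ _ (fun beta => EX1y d alpha z beta) (@ln R) _ (continuous_ln Lpos) L.
exact: H.
Qed.
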